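(* In the setup described in the context, let $x\in T_pM$ induce a $Q$-basis. Let $\psi=\angle(x,Q^2x)$ be the $g$-angle, and assume $\psi\neq\pi/2$. Then $$\tilde r(x)=\frac{1}{\cos\psi}\,r(x)+\frac{1}{8\cos\psi}(3\tilde\tau^*+\tilde\tau-3\tau-\tau^* )+\frac18(3\tilde\tau+\tilde\tau^*-3\tau^*-\tau).$$
   Context: Let $M$ be a 3-dimensional smooth manifold. Fix a coordinate chart $(x^1,x^2,x^3)$ with coordinate vector fields $\partial_i$. Structures: - $g$ is a Riemannian metric with $g(\partial_1,\partial_1)=g(\partial_2,\partial_2)=A$, $g(\partial_3,\partial_3)=B$ and $g(\partial_i,\partial_j)=0$ for $i\ne j$. Here $A,B$ are smooth positive functions. - $Q$ is the $(1,1)$-tensor field with $Q\partial_1=\partial_2$, $Q\partial_2=-\partial_1$, $Q\partial_3=\partial_3$. - $P=Q^2$ and $\tilde g(x,y)=g(x,Py)$. Connections and curvature: - $\nabla$ and $\tilde\nabla$ are the Levi-Civita connections of $g$ and $\tilde g$. - $R(x,y)z=\nabla_x\nabla_yz-\nabla_y\nabla_xz-\nabla_{[x,y]}z$ and $R(x,y,z,t)=g(R(x,y)z,t)$. Analogously $\tilde R(x,y,z,t)=\tilde g(\tilde R(x,y)z,t)$. Ricci tensors and scalar quantities: - $\rho(y,z)=g^{ij}R(e_i,y,z,e_j)$ and $\tilde\rho(y,z)=\tilde g^{ij}\tilde R(e_i,y,z,e_j)$. - $\tau=g^{ij}\rho_{ij}$, $\tau^*=\tilde g^{ij}\rho_{ij}$,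 $\tilde\tau=\tilde g^{ij}\tilde\rho_{ij}$, $\tilde\tau^*=g^{ij}\tilde\rho_{ij}$. Ricci curvatures in a direction: - $r(x)=\rho(x,x)/g(x,x)$ and $\tilde r(x)=\tilde\rho(x,x)/\tilde g(x,x)$. Angles and $Q$-bases: - The $g$-angle is defined by $\cos\angle(u,v)=g(u,v)/\sqrt{g(u,u)g(v,v)}$. - A vector $x$ induces a $Q$-basis if $\{x,Qx,Q^2x\}$ is a basis of $T_pM$. *)

(* Defs.v *)
From Stdlib Require Import Reals Lra.
From Coquelicot Require Import Coquelicot.
Open Scope R_scope.

(* Points of the coordinate chart (x^1,x^2,x^3), and tangent-vector
   components in the coordinate basis (d_1,d_2,d_3), are triples of reals.
   Indices are 0,1,2 (standing for 1,2,3). *)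
Definition pt := (R * R * R)%type.

Definition coord (p : pt) (i : nat) : R :=
  match p with (a, b, c) =>
    match i with O => a | 1%nat => b | _ => c end end.

Definition upd (p : pt) (i : nat) (t : R) : pt :=
  match p with (a, b, c) =>
    match i with O => (t, b, c) | 1%nat => (a, t, c) | _ => (a, b, t) end end.

Definition mkpt (f : nat -> R) : pt := (f 0%nat, f 1%nat, f 2%nat).

Definition sum3 (f : nat -> R) : R := f 0%nat + f 1%nat + f 2%nat.

Definition pd (i : nat) (f : pt -> R) (p : pt) : R :=
  Derive (fun t => f (upd p i t)) (coord p i).

Definition iter_pd (l : list nat) (f : pt -> R) : pt -> R :=
  List.fold_right pd f l.

Definition smooth_on (U : pt -> Prop) (f : pt -> R) : Prop :=
  forall (l : list nat), List.Forall (fun i => (i < 3)%nat) l ->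
    forall p, U p ->
      continuous (iter_pd l f) p /\
      forall i, (i < 3)%nat -> ex_derive (fun t => iter_pd l f (upd p i t)) (coord p i).

Definition det3 (M : nat -> nat -> R) : R :=
  M 0%nat 0%nat * (M 1%nat 1%nat * M 2%nat 2%nat - M 1%nat 2%nat * M 2%nat 1%nat)
  - M 0%nat 1%nat * (M 1%nat 0%nat * M 2%nat 2%nat - M 1%nat 2%nat * M 2%nat 0%nat)
  + M 0%nat 2%nat * (M 1%nat 0%nat * M 2%nat 1%nat - M 1%nat 1%nat * M 2%nat 0%nat).

(* inverse matrix via the adjugate: (M^-1)_{ij} = cofactor_{ji} / det,
   written with cyclic indices mod 3 *)
Definition inv3 (M : nat -> nat -> R) (i j : nat) : R :=
  let s k := ((k + 1) mod 3)%nat in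
  let t k := ((k + 2) mod 3)%nat in
  (M (s j) (s i) * M (t j) (t i) - M (s j) (t i) * M (t j) (s i)) / det3 M.

Definition gmet (A B : pt -> R) (i j : nat) (p : pt) : R :=
  if Nat.eqb i j then (if Nat.eqb i 2 then B p else A p) else 0.

(* Q as a matrix: Q d_j = sum_k Qm k j d_k *)
Definition Qm (k j : nat) : R :=
  match k, j with
  | 1%nat, 0%nat => 1
  | 0%nat, 1%nat => -1
  | 2%nat, 2%nat => 1
  | _, _ => 0
  end.

Definition Pm (k j : nat) : R := sum3 (fun m => Qm k m * Qm m j).

Definition Qv (x : pt) : pt := mkpt (fun k => sum3 (fun j => Qm k j * coord x j)).

(* tilde g (d_i, d_j) = g(d_i, P d_j) *)
Definition gtmet (A B : pt -> R) (i j : nat) (p : pt) : R :=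
  sum3 (fun k => Pm k j * gmet A B i k p).

Definition inv_met (G : nat -> nat -> pt -> R) (i j : nat) (p : pt) : R :=
  inv3 (fun a b => G a b p) i j.

(* Christoffel symbols: nabla_{d_i} d_j = sum_k Gam k i j d_k *)
Definition Gam (G : nat -> nat -> pt -> R) (k i j : nat) (p : pt) : R :=
  / 2 * sum3 (fun l => inv_met G k l p *
     (pd i (G j l) p + pd j (G i l) p - pd l (G i j) p)).

(* R(d_i, d_j) d_k = sum_l Riem l i j k d_l, with
   R(x,y)z = nabla_x nabla_y z - nabla_y nabla_x z - nabla_[x,y] z *)
Definition Riem (G : nat -> nat -> pt -> R) (l i j k : nat) (p : pt) : R :=
  pd i (Gam G l j k) p - pd j (Gam G l i k) p
  + sum3 (fun m => Gam G m j k p * Gam G l i m p - Gam G m i k p * Gam G l j m p).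

(* R(d_a,d_b,d_c,d_d) = G(R(d_a,d_b)d_c, d_d) *)
Definition R4 (G : nat -> nat -> pt -> R) (a b c d : nat) (p : pt) : R :=
  sum3 (fun l => Riem G l a b c p * G l d p).

(* Ricci tensor rho(y,z) = G^{ij} R(e_i, y, z, e_j) *)
Definition Ric (G : nat -> nat -> pt -> R) (b c : nat) (p : pt) : R :=
  sum3 (fun a => sum3 (fun d => inv_met G a d p * R4 G a b c d p)).

Definition bil (F : nat -> nat -> R) (x y : pt) : R :=
  sum3 (fun i => sum3 (fun j => F i j * coord x i * coord y j)).

Definition trace_wrt (H : nat -> nat -> pt -> R) (T : nat -> nat -> pt -> R) (p : pt) : R :=
  sum3 (fun i => sum3 (fun j => inv_met H i j p * T i j p)).

Definition rho A B := Ric (gmet A B).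
Definition rhot A B := Ric (gtmet A B).
Definition tau A B p := trace_wrt (gmet A B) (rho A B) p.
Definition tau_star A B p := trace_wrt (gtmet A B) (rho A B) p.
Definition taut A B p := trace_wrt (gtmet A B) (rhot A B) p.
Definition taut_star A B p := trace_wrt (gmet A B) (rhot A B) p.

Definition ric_dir A B p (x : pt) : R :=
  bil (fun i j => rho A B i j p) x x / bil (fun i j => gmet A B i j p) x x.
Definition ric_dir_t A B p (x : pt) : R :=
  bil (fun i j => rhot A B i j p) x x / bil (fun i j => gtmet A B i j p) x x.

Definition g_angle A B p (u v : pt) : R :=
  acos (bil (fun i j => gmet A B i j p) u v /
        sqrt (bil (fun i j => gmet A B i j p) u u * bil (fun i j => gmet A B i j p) v v)).

Definition vzero : pt := (0, 0, 0).
Definition vadd (u v : pt) : pt := mkpt (fun i => coord u i + coord v i).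
Definition vscal (a : R) (u : pt) : pt := mkpt (fun i => a * coord u i).

Definition is_basis3 (u v w : pt) : Prop :=
  (forall a b c, vadd (vadd (vscal a u) (vscal b v)) (vscal c w) = vzero ->
     a = 0 /\ b = 0 /\ c = 0) /\
  (forall y : pt, exists a b c, vadd (vadd (vscal a u) (vscal b v)) (vscal c w) = y).

Definition induces_Q_basis (x : pt) : Prop := is_basis3 x (Qv x) (Qv (Qv x)).

(* Main.v *)
Require Import Defs.
From Stdlib Require Import Reals Lra Lia.
From Coquelicot Require Import Coquelicot.
Open Scope R_scope.

Definition diagat (G : nat -> nat -> pt -> R) (q : pt) : Prop :=
  G 0%nat 1%nat q = 0 /\ G 0%nat 2%nat q = 0 /\ G 1%nat 0%nat q = 0 /\
  G 1%nat 2%nat q = 0 /\ G 2%nat 0%nat q = 0 /\ G 2%nat 1%nat q = 0 /\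
  G 0%nat 0%nat q <> 0 /\ G 1%nat 1%nat q <> 0 /\ G 2%nat 2%nat q <> 0.

Lemma inv_diag G q : diagat G q -> forall k l, (k < 3)%nat -> (l < 3)%nat ->
  inv_met G k l q = if Nat.eqb k l then / G k k q else 0.
Proof.
  intros (h1&h2&h3&h4&h5&h6&n0&n1&n2) k l hk hl.
  destruct k as [|[|[|k]]]; try lia; destruct l as [|[|[|l]]]; try lia;
  unfold inv_met, inv3, det3; simpl; rewrite ?h1, ?h2, ?h3, ?h4, ?h5, ?h6;
  field; repeat split; auto.
Qed.

Lemma Gam_diag G q : diagat G q -> forall k i j, (k < 3)%nat ->
  Gam G k i j q = / 2 * / G k k q * (pd i (G j k) q + pd j (G i k) q - pd k (G i j) q).
Proof.
  intros hd k i j hk. unfold Gam, sum3.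
  rewrite !(inv_diag G q hd) by lia.
  destruct k as [|[|[|k]]]; try lia; simpl; ring.
Qed.

Lemma Ric_diag G q : diagat G q -> forall b c,
  Ric G b c q = sum3 (fun a => Riem G a a b c q).
Proof.
  intros hd b c. pose proof hd as (h1&h2&h3&h4&h5&h6&n0&n1&n2).
  unfold Ric, R4, sum3.
  rewrite !(inv_diag G q hd) by lia. simpl.
  rewrite ?h1, ?h2, ?h3, ?h4, ?h5, ?h6. field. auto.
Qed.

Section S.
Variables (A B : pt -> R).

Lemma pd_gmet m i j q : pd m (gmet A B i j) q =
  if Nat.eqb i j then (if Nat.eqb i 2 then pd m B q else pd m A q) else 0.
Proof.
  unfold pd, gmet. destruct (Nat.eqb i j); [destruct (Nat.eqb i 2)|]; auto.
  apply Derive_const.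
Qed.

Lemma gtmet_eq i j q : (j < 3)%nat -> gtmet A B i j q = Pm j j * gmet A B i j q.
Proof.
  intros hj. destruct j as [|[|[|j]]]; try lia;
  unfold gtmet, sum3, Pm, Qm, sum3; simpl; ring.
Qed.

Lemma pd_gtmet m i j q : (j < 3)%nat -> pd m (gtmet A B i j) q = Pm j j * pd m (gmet A B i j) q.
Proof.
  intros hj. unfold pd. rewrite <- Derive_scal. apply Derive_ext. intros t.
  apply gtmet_eq; auto.
Qed.

Lemma diag_g q : 0 < A q -> 0 < B q -> diagat (gmet A B) q.
Proof. intros; unfold diagat, gmet; simpl; repeat split; lra. Qed.

Lemma diag_gt q : 0 < A q -> 0 < B q -> diagat (gtmet A B) q.
Proof. intros; unfold diagat, gtmet, Pm, Qm, sum3, gmet; simpl; repeat split; try ring; lra. Qed.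

Definition sig (k i j : nat) : R :=
  if andb (Nat.eqb i j) (xorb (Nat.eqb k 2) (Nat.eqb i 2)) then -1 else 1.

Lemma Gam_sig q : 0 < A q -> 0 < B q -> forall k i j, (k < 3)%nat -> (i < 3)%nat -> (j < 3)%nat ->
  Gam (gtmet A B) k i j q = sig k i j * Gam (gmet A B) k i j q.
Proof.
  intros hA hB k i j hk hi hj.
  rewrite (Gam_diag _ _ (diag_gt q hA hB)) by lia.
  rewrite (Gam_diag _ _ (diag_g q hA hB)) by lia.
  rewrite !pd_gtmet by lia. rewrite gtmet_eq by lia. rewrite !pd_gmet.
  destruct k as [|[|[|k]]]; try lia; destruct i as [|[|[|i]]]; try lia;
  destruct j as [|[|[|j]]]; try lia; unfold sig, Pm, Qm, sum3, gmet; simpl;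
  field; lra.
Qed.
End S.

Lemma loc_upd (U : pt -> Prop) p a : open U -> U p -> locally (coord p a) (fun t => U (upd p a t)).
Proof.
  intros hU hp. destruct (hU p hp) as [eps H].
  exists eps. intros t ht. apply H.
  destruct p as [[p0 p1] p2].
  destruct a as [|[|a]]; simpl in *;
  repeat split; try apply ball_center; exact ht.
Qed.

Lemma pd_Gam_sig (U : pt -> Prop) A B p (hU : open U) (hp : U p)
  (hA : forall q, U q -> 0 < A q) (hB : forall q, U q -> 0 < B q) :
  forall m k i j, (k < 3)%nat -> (i < 3)%nat -> (j < 3)%nat ->
  pd m (Gam (gtmet A B) k i j) p = sig k i j * pd m (Gam (gmet A B) k i j) p.
Proof.
  intros m k i j hk hi hj. unfold pd. rewrite <- Derive_scal.
  apply Derive_ext_loc.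
  generalize (loc_upd U p m hU hp). apply filter_imp. intros t ht.
  apply Gam_sig; auto.
Qed.

Lemma pd_Gam_eq (U : pt -> Prop) A B p (hU : open U) (hp : U p)
  (hA : forall q, U q -> 0 < A q) (hB : forall q, U q -> 0 < B q) :
  pd 2 (Gam (gmet A B) 2 0 0) p = pd 2 (Gam (gmet A B) 2 1 1) p.
Proof.
  unfold pd. apply Derive_ext_loc.
  generalize (loc_upd U p 2 hU hp). apply filter_imp. intros t ht.
  rewrite !(Gam_diag _ _ (diag_g A B _ (hA _ ht) (hB _ ht))) by lia.
  rewrite !pd_gmet. simpl. ring.
Qed.

Ltac ricsolve U A B p hU hp hA hB :=
  let hAp := fresh in let hBp := fresh in
  assert (hAp := hA p hp); assert (hBp := hB p hp);
  rewrite !(Ric_diag _ p (diag_gt A B p hAp hBp));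
  rewrite !(Ric_diag _ p (diag_g A B p hAp hBp));
  unfold sum3, Riem; unfold sum3;
  rewrite !(pd_Gam_sig U A B p hU hp hA hB) by lia;
  rewrite ?(pd_Gam_eq U A B p hU hp hA hB);
  rewrite !(Gam_sig A B p hAp hBp) by lia;
  rewrite !(Gam_diag (gmet A B) p (diag_g A B p hAp hBp)) by lia;
  rewrite !pd_gmet; unfold sig, gmet; simpl; field; repeat split; lra.

Lemma Ric_off (U : pt -> Prop) A B p (hU : open U) (hp : U p)
  (hA : forall q, U q -> 0 < A q) (hB : forall q, U q -> 0 < B q) :
  forall b c, (b < 3)%nat -> (c < 3)%nat -> b <> c ->
  Ric (gtmet A B) b c p = Ric (gmet A B) b c p.
Proof.
  intros b c hb hc hbc.
  destruct b as [|[|[|b]]]; try lia; destruct c as [|[|[|c]]]; try lia.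
  all: ricsolve U A B p hU hp hA hB. Show.
Qed.

Lemma Ric_d (U : pt -> Prop) A B p (hU : open U) (hp : U p)
  (hA : forall q, U q -> 0 < A q) (hB : forall q, U q -> 0 < B q) :
  Ric (gtmet A B) 0 0 p - Ric (gmet A B) 0 0 p = Ric (gtmet A B) 1 1 p - Ric (gmet A B) 1 1 p.
Proof.
  ricsolve U A B p hU hp hA hB.
Qed.

Theorem theorem5p5 (U : pt -> Prop) (A B : pt -> R)
  (HU : open U) (HA : smooth_on U A) (HB : smooth_on U B)
  (HApos : forall q, U q -> 0 < A q) (HBpos : forall q, U q -> 0 < B q)
  (p : pt) (Hp : U p) (x : pt)
  (Hx : induces_Q_basis x)
  (Hpsi : g_angle A B p x (Qv (Qv x)) <> PI / 2) :
  let psi := g_angle A B p x (Qv (Qv x)) in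
  ric_dir_t A B p x =
    / cos psi * ric_dir A B p x
    + / (8 * cos psi) * (3 * taut_star A B p + taut A B p - 3 * tau A B p - tau_star A B p)
    + / 8 * (3 * taut A B p + taut_star A B p - 3 * tau_star A B p - tau A B p).
Proof.
  intro psi.
  assert (hAp := HApos p Hp); assert (hBp := HBpos p Hp).
  destruct x as [[x0 x1] x2].
  set (w := A p * (x0*x0 + x1*x1) + B p * (x2*x2)).
  set (v := - A p * (x0*x0 + x1*x1) + B p * (x2*x2)).
  assert (Hnz : ~ (x0 = 0 /\ x1 = 0 /\ x2 = 0)).
  { intros (h0&h1&h2); subst. destruct Hx as [Hli _].
    destruct (Hli 1 0 0) as [H1 _]; [|lra].
    unfold vadd, vscal, mkpt, coord, Qv, vzero; simpl. repeat f_equal; ring. }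
  assert (Hw : 0 < w).
  { unfold w. destruct (Req_dec x2 0) as [h2|h2].
    - destruct (Req_dec x0 0) as [h0|h0].
      + destruct (Req_dec x1 0) as [h1|h1]. { exfalso; tauto. }
        assert (0 < x1 * x1) by (apply Rsqr_pos_lt; auto). nra.
      + assert (0 < x0 * x0) by (apply Rsqr_pos_lt; auto). nra.
    - assert (0 < x2 * x2) by (apply Rsqr_pos_lt; auto). nra. }
  assert (E1 : bil (fun i j => gmet A B i j p) (x0, x1, x2) (Qv (Qv (x0, x1, x2))) = v).
  { unfold bil, sum3, Qv, mkpt, coord, gmet, sum3, Qm, v; simpl. ring. }
  assert (E2 : bil (fun i j => gmet A B i j p) (x0, x1, x2) (x0, x1, x2) = w).
  { unfold bil, sum3, coord, gmet, w; simpl. ring. }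
  assert (E3 : bil (fun i j => gmet A B i j p) (Qv (Qv (x0, x1, x2))) (Qv (Qv (x0, x1, x2))) = w).
  { unfold bil, sum3, Qv, mkpt, coord, gmet, sum3, Qm, w; simpl. ring. }
  assert (E4 : bil (fun i j => gtmet A B i j p) (x0, x1, x2) (x0, x1, x2) = v).
  { unfold bil, sum3, coord, gtmet, Pm, Qm, gmet, sum3, v; simpl. ring. }
  assert (Hwi : w * / w = 1) by (field; lra).
  assert (Hvw : -1 <= v / w <= 1).
  { unfold Rdiv. assert (0 < / w) by (apply Rinv_0_lt_compat; auto).
    assert (0 <= A p * (x0*x0+x1*x1)) by nra.
    assert (0 <= B p * (x2*x2)) by nra.
    assert (0 <= (v + w) * / w) by (apply Rmult_le_pos; unfold v, w in *; lra).
    assert (0 <= (w - v) * / w) by (apply Rmult_le_pos; unfold v, w in *; lra).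
    assert ((v + w) * / w = v * / w + w * / w) by ring.
    assert ((w - v) * / w = w * / w - v * / w) by ring.
    split; lra. }
  assert (Hc : cos psi = v / w).
  { unfold psi, g_angle. rewrite E1, E2, E3, sqrt_square by lra.
    apply cos_acos; auto. }
  assert (Hv : v <> 0).
  { intro hv. apply Hpsi. unfold g_angle. rewrite E1, E2, E3, sqrt_square by lra.
    rewrite hv. unfold Rdiv. rewrite Rmult_0_l. apply acos_0. }
  rewrite Hc.
  assert (H11 : Ric (gtmet A B) 1 1 p = Ric (gmet A B) 1 1 p + (Ric (gtmet A B) 0 0 p - Ric (gmet A B) 0 0 p)).
  { pose proof (Ric_d U A B p HU Hp HApos HBpos). lra. }
  unfold ric_dir_t, ric_dir. rewrite E2, E4.
  unfold taut, taut_star, tau, tau_star, trace_wrt, rho, rhot, sum3.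
  rewrite !(inv_diag _ p (diag_gt A B p hAp hBp)) by lia.
  rewrite !(inv_diag _ p (diag_g A B p hAp hBp)) by lia.
  unfold bil, sum3, coord. simpl.
  rewrite (Ric_off U A B p HU Hp HApos HBpos 0 1), (Ric_off U A B p HU Hp HApos HBpos 0 2),
    (Ric_off U A B p HU Hp HApos HBpos 1 0), (Ric_off U A B p HU Hp HApos HBpos 1 2),
    (Ric_off U A B p HU Hp HApos HBpos 2 0), (Ric_off U A B p HU Hp HApos HBpos 2 1) by lia.
  rewrite H11.
  rewrite !gtmet_eq by lia. unfold Pm, Qm, sum3, gmet. simpl.
  unfold v, w in *. field. repeat split; try assumption; lra.
Qed.
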